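(* Let $t\in[0,1]$, $x\in(0,1]$, and $y$ with $1-e^{-t}\le y<1$. Then \[ (1-yx)\,\frac{\log\big(1-x+x\,\frac{e^{-2xt}}{1-yx}\big)}{x\big(1-\frac{e^{-2xt}}{1-yx}\big)}\ \le\ (1-y)\,\frac{\log\big(\frac{e^{-2t}}{1-y}\big)}{1-\frac{e^{-2t}}{1-y}}, \] with equality at $x=1$. Expressions of the form $\log(1-x+xQ)/(1-Q)$ are understood at $Q=1$ as their limit $-x$. *)

(* Defs.v *)
From Stdlib Require Import Reals.
Open Scope R_scope.

Definition G (x Q : R) : R :=
  if Req_EM_T Q 1 then - x else ln (1 - x + x * Q) / (1 - Q).

Definition lhs (t x y : R) : R :=
  (1 - y * x) * (G x (exp (-2 * x * t) / (1 - y * x)) / x).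

(* Right-hand side: (1 - y) * log(Q) / (1 - Q), Q = e^{-2t}/(1-y);
   this is the form log(1 - 1 + 1*Q)/(1 - Q), i.e. G 1 Q. *)
Definition rhs (t y : R) : R :=
  (1 - y) * G 1 (exp (-2 * t) / (1 - y)).

(* Main.v *)
Require Import Defs.
From Stdlib Require Import Reals Lra Psatz.
From Coquelicot Require Import Coquelicot.
Open Scope R_scope.

Lemma exp_le_exp x y : x <= y -> exp x <= exp y.
Proof. intros H. destruct (Rle_lt_or_eq_dec _ _ H) as [h|h]; [left; apply exp_increasing; exact h|rewrite h; lra]. Qed.

Lemma mono0 (f df : R -> R) q : 0 <= q ->
  (forall s, 0 <= s <= q -> is_derive f s (df s)) ->
  (forall s, 0 <= s <= q -> 0 <= df s) -> f 0 <= f q.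
Proof.
intros Hq Hd Hp. destruct (Req_dec q 0) as [->|Hq0]; [lra|].
destruct (MVT_cor2 f df 0 q) as [c [Hc1 Hc2]]; [lra| |].
- intros c Hc. apply is_derive_Reals. apply Hd. lra.
- assert (0 <= df c) by (apply Hp; lra). nra.
Qed.

Lemma exp_sum_ge2 s : 2 <= exp s + exp (- s).
Proof. pose proof (exp_ineq1_le s). pose proof (exp_ineq1_le (-s)). lra. Qed.

Lemma sinh_ge s : 0 <= s -> 2*s <= exp s - exp (-s).
Proof.
intros Hs.
assert (H := mono0 (fun s => exp s - exp (-s) - 2*s) (fun s => exp s + exp (-s) - 2) s Hs).
simpl in H. rewrite Ropp_0, exp_0 in H.
assert (0 <= exp s - exp (-s) - 2*s); [|lra].
replace 0 with (1 - 1 - 2*0) by ring. apply H.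
- intros r _. auto_derive; [exact I|ring].
- intros r _. pose proof (exp_sum_ge2 r). lra.
Qed.

Lemma cosh_mono s r : 0 <= r <= s -> exp r + exp (-r) <= exp s + exp (-s).
Proof.
intros Hr.
assert (E: exp s + exp (-s) - (exp r + exp (-r)) = (exp s - exp r) * (1 - exp (-s) * exp (-r))).
{ rewrite !exp_Ropp. pose proof (exp_pos s). pose proof (exp_pos r). field; lra. }
assert (exp r <= exp s) by (apply exp_le_exp; lra).
assert (exp (-s) * exp (-r) <= 1).
{ rewrite <- exp_plus. rewrite <- exp_0. apply exp_le_exp. lra. }
nra.
Qed.

Lemma sinh_scale l s : 0 <= l <= 1 -> 0 <= s ->
  exp (l*s) - exp (-(l*s)) <= l * (exp s - exp (-s)).
Proof.
intros Hl Hs.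
assert (H := mono0 (fun s => l*(exp s - exp (-s)) - (exp (l*s) - exp (-(l*s))))
   (fun s => l*((exp s + exp (-s)) - (exp (l*s) + exp (-(l*s))))) s Hs).
simpl in H. rewrite Rmult_0_r, Ropp_0, exp_0 in H.
assert (0 <= l*(exp s - exp (-s)) - (exp (l*s) - exp (-(l*s)))); [|lra].
replace 0 with (l*(1-1) - (1-1)) by ring. apply H.
- intros r _. auto_derive; [exact I|ring].
- intros r Hr. apply Rmult_le_pos; [lra|]. pose proof (cosh_mono r (l*r)). nra.
Qed.

Definition F z := if Req_EM_T z 0 then 1 else (exp z - 1)/z.

Lemma F_ge1 z : 0 <= z -> 1 <= F z.
Proof.
intros Hz. unfold F. destruct (Req_EM_T z 0); [lra|].
pose proof (exp_ineq1_le z). apply (Rmult_le_reg_r z); [lra|].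
field_simplify; lra.
Qed.

Lemma F_le1 z : z <= 0 -> F z <= 1.
Proof.
intros Hz. unfold F. destruct (Req_EM_T z 0); [lra|].
pose proof (exp_ineq1_le z).
apply (Rmult_le_reg_r (-z)); [lra|].
replace ((exp z - 1) / z * - z) with (1 - exp z) by (field; auto). lra.
Qed.

Lemma F_pos z : 0 < F z.
Proof.
unfold F. destruct (Req_EM_T z 0); [lra|].
destruct (Rlt_or_le 0 z).
- pose proof (exp_ineq1 z n). apply Rdiv_lt_0_compat; lra.
- assert (exp z < 1) by (rewrite <- exp_0; apply exp_increasing; lra).
  replace ((exp z - 1)/z) with ((1 - exp z)/(-z)) by (field; auto).
  apply Rdiv_lt_0_compat; lra.
Qed.

Lemma exp_conv l p q : 0 <= l <= 1 ->
  exp (l*p + (1-l)*q) <= l * exp p + (1-l) * exp q.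
Proof.
intros Hl. set (m := l*p + (1-l)*q).
assert (Ep : exp p = exp m * exp (p - m)) by (rewrite <- exp_plus; f_equal; ring).
assert (Eq : exp q = exp m * exp (q - m)) by (rewrite <- exp_plus; f_equal; ring).
pose proof (exp_ineq1_le (p - m)). pose proof (exp_ineq1_le (q - m)).
pose proof (exp_pos m).
assert (exp m * (1 + (p-m)) <= exp p) by (rewrite Ep; apply Rmult_le_compat_l; lra).
assert (exp m * (1 + (q-m)) <= exp q) by (rewrite Eq; apply Rmult_le_compat_l; lra).
assert (l * (exp m * (1 + (p-m))) + (1-l)*(exp m * (1 + (q-m))) = exp m) by (unfold m; ring).
nra.
Qed.

Lemma F_incr z z' : z <= z' -> F z <= F z'.
Proof.
intros Hzz.
destruct (Rle_or_lt z 0) as [Hz|Hz]; destruct (Rle_or_lt z' 0) as [Hz'|Hz'].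
-
  destruct (Req_dec z' 0) as [Hn'|Hn'].
  { subst z'. replace (F 0) with 1 by (unfold F; destruct (Req_EM_T 0 0); lra). apply F_le1; lra. }
  unfold F. destruct (Req_EM_T z 0); [lra|]. destruct (Req_EM_T z' 0); [lra|].
  assert (Hl : 0 <= z'/z <= 1).
  { split. replace (z'/z) with ((-z')/(-z)) by (field; auto). apply Rdiv_le_0_compat; lra.
    apply (Rmult_le_reg_r (-z)); [lra|]. replace (z'/z * -z) with (-z') by (field; auto). lra. }
  pose proof (exp_conv (z'/z) z 0 Hl).
  replace (z' / z * z + (1 - z' / z) * 0) with z' in H by (field; auto).
  rewrite exp_0 in H.
  apply (Rmult_le_reg_r (-z')); [lra|].
  replace ((exp z' - 1) / z' * - z') with (1 - exp z') by (field; auto).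
  replace ((exp z - 1) / z * - z') with (- (z'/z * exp z - z'/z)) by (field; auto).
  lra.
- pose proof (F_le1 z Hz). pose proof (F_ge1 z' (Rlt_le _ _ Hz')). lra.
- lra.
- unfold F. destruct (Req_EM_T z 0); [lra|]. destruct (Req_EM_T z' 0); [lra|].
  assert (Hl : 0 <= z/z' <= 1).
  { split. apply Rdiv_le_0_compat; lra. apply (Rmult_le_reg_r z'); [lra|].
    replace (z/z' * z') with z by (field; auto). lra. }
  pose proof (exp_conv (z/z') z' 0 Hl).
  replace (z / z' * z' + (1 - z / z') * 0) with z in H by (field; auto).
  rewrite exp_0 in H.
  apply (Rmult_le_reg_r z); [lra|]. 
  replace ((exp z - 1) / z * z) with (exp z - 1) by (field; auto).
  replace ((exp z' - 1) / z' * z) with (z/z' * exp z' - z/z') by (field; auto).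
  lra.
Qed.

Lemma F_neg z : F z = exp z * F (- z).
Proof.
unfold F. destruct (Req_EM_T z 0) as [e|n]; destruct (Req_EM_T (-z) 0) as [e'|n'].
- subst. rewrite exp_0. ring.
- lra.
- lra.
- rewrite exp_Ropp. pose proof (exp_pos z). field. split; lra.
Qed.

Definition H z := exp (- (z/2)) * F z.

Lemma H_even z : H (- z) = H z.
Proof.
unfold H. rewrite (F_neg z). rewrite <- Rmult_assoc, <- exp_plus. f_equal. f_equal. field.
Qed.

Lemma H_form z : z <> 0 -> H z = (exp (z/2) - exp (-(z/2))) / z.
Proof.
intros Hz. unfold H, F. destruct (Req_EM_T z 0); [lra|].
assert (E : exp z = exp (z/2) * exp (z/2)) by (rewrite <- exp_plus; f_equal; field).
rewrite E, exp_Ropp. pose proof (exp_pos (z/2)). field. split; lra.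
Qed.

Lemma H_mono p q : 0 <= p <= q -> H p <= H q.
Proof.
intros Hpq.
destruct (Req_dec q 0) as [Hq|Hq].
{ assert (p = 0) by lra. subst. lra. }
rewrite (H_form q Hq).
destruct (Req_dec p 0) as [Hp|Hp].
- subst p. replace (H 0) with 1 by (unfold H, F; destruct (Req_EM_T 0 0); [|lra];
    replace (- (0/2)) with 0 by field; rewrite exp_0; ring).
  pose proof (sinh_ge (q/2)).
  apply (Rmult_le_reg_r q); [lra|].
  replace ((exp (q / 2) - exp (- (q / 2))) / q * q) with (exp (q / 2) - exp (- (q / 2))) by (field; auto).
  lra.
- rewrite (H_form p Hp).
  pose proof (sinh_scale (p/q) (q/2)) as S.
  replace (p/q*(q/2)) with (p/2) in S by (field; auto).
  assert (Hl : 0 <= p/q <= 1).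
  { split. apply Rdiv_le_0_compat; lra. apply (Rmult_le_reg_r q); [lra|].
    replace (p/q*q) with p by (field; auto). lra. }
  specialize (S Hl ltac:(lra)).
  apply (Rmult_le_reg_r p); [lra|].
  replace ((exp (p / 2) - exp (- (p / 2))) / p * p) with (exp (p / 2) - exp (- (p / 2))) by (field; auto).
  replace ((exp (q / 2) - exp (- (q / 2))) / q * p) with (p / q * (exp (q / 2) - exp (- (q / 2)))) by (field; auto).
  exact S.
Qed.

Lemma H_abs z z' : Rabs z <= Rabs z' -> H z <= H z'.
Proof.
intros Ha.
assert (E : forall w, H w = H (Rabs w)).
{ intros w. unfold Rabs. destruct (Rcase_abs w); [rewrite H_even|]; reflexivity. }
rewrite (E z), (E z'). apply H_mono. split; [apply Rabs_pos|exact Ha].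
Qed.

Lemma exp_le_inv x y : exp x <= exp y -> x <= y.
Proof. intros H0. destruct (Rle_or_lt x y) as [h|h]; [exact h|].
 pose proof (exp_increasing _ _ h). lra. Qed.

Lemma exp_half2 w : exp w = exp (w/2) ^ 2.
Proof. rewrite <- (exp_plus (w/2) (w/2)) || idtac. simpl. rewrite Rmult_1_r, <- exp_plus. f_equal. field. Qed.

Lemma key a c N u : 0 < c -> 0 < a -> 0 < N -> 0 < u -> c <= a ->
  c^3 * N <= a^3 * u^2 ->
  (c^2 <= a * u^2 -> c^2 * N <= a^2 * u^2) ->
  (c^2 > a * u^2 -> N * u^2 <= a * c) ->
  c * F (ln (N/a)) <= a * F (ln (u^2/c)).
Proof.
intros Hc Ha HN Hu Hca H3 HC HB.
set (z := ln (N/a)). set (z1 := ln (u^2/c)).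
assert (Ez : exp z = N/a) by (apply exp_ln; apply Rdiv_lt_0_compat; lra).
assert (Ez1 : exp z1 = u^2/c) by (apply exp_ln; apply Rdiv_lt_0_compat; nra).
pose proof (F_pos z). pose proof (F_pos z1).
destruct (Rle_or_lt z z1) as [Hzz|Hzz].
- pose proof (F_incr z z1 Hzz). nra.
- destruct (Rle_or_lt (c^2) (a*u^2)) as [Hs|Hs].
  + specialize (HC Hs).
    assert (Hce : c * exp z <= a * exp z1).
    { rewrite Ez, Ez1. apply (Rmult_le_reg_r (a*c)); [nra|].
      replace (c * (N/a) * (a*c)) with (c^2*N) by (field; lra).
      replace (a * (u^2/c) * (a*c)) with (a^2*u^2) by (field; lra). lra. }
    rewrite (F_neg z), (F_neg z1).
    pose proof (F_incr (-z) (-z1) ltac:(lra)).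
    pose proof (F_pos (-z)). pose proof (exp_pos z). pose proof (exp_pos z1).
    apply Rle_trans with (c * exp z * F (- z1)).
    * replace (c * (exp z * F (- z))) with (c * exp z * F (-z)) by ring.
      apply Rmult_le_compat_l; nra.
    * replace (a * (exp z1 * F (- z1))) with (a * exp z1 * F (-z1)) by ring.
      apply Rmult_le_compat_r; lra.
  + specialize (HB Hs).
    assert (Hsum : z + z1 <= 0).
    { apply exp_le_inv. rewrite exp_plus, Ez, Ez1, exp_0.
      apply (Rmult_le_reg_r (a*c)); [nra|].
      replace (N / a * (u ^ 2 / c) * (a * c)) with (N*u^2) by (field; lra). lra. }
    assert (Habs : Rabs z <= Rabs z1).
    { rewrite (Rabs_left z1) by lra. unfold Rabs. destruct (Rcase_abs z); lra. }
    pose proof (H_abs z z1 Habs) as HH.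
    assert (Fz : F z = exp (z/2) * H z).
    { unfold H. rewrite <- Rmult_assoc, <- exp_plus. replace (z/2 + - (z/2)) with 0 by ring.
      rewrite exp_0; ring. }
    assert (Fz1 : F z1 = exp (z1/2) * H z1).
    { unfold H. rewrite <- Rmult_assoc, <- exp_plus. replace (z1/2 + - (z1/2)) with 0 by ring.
      rewrite exp_0; ring. }
    assert (Hsq : (c * exp (z/2))^2 <= (a * exp (z1/2))^2).
    { replace ((c * exp (z/2))^2) with (c^2 * exp z) by (rewrite (exp_half2 z); ring).
      replace ((a * exp (z1/2))^2) with (a^2 * exp z1) by (rewrite (exp_half2 z1); ring).
      rewrite Ez, Ez1. apply (Rmult_le_reg_r (a*c)); [nra|].
      replace (c^2 * (N/a) * (a*c)) with (c^3*N) by (field; lra).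
      replace (a^2 * (u^2/c) * (a*c)) with (a^3*u^2) by (field; lra). lra. }
    pose proof (exp_pos (z/2)). pose proof (exp_pos (z1/2)).
    assert (Hle : c * exp (z/2) <= a * exp (z1/2)).
    { apply Rsqr_incr_0_var. unfold Rsqr. simpl in Hsq. nra. nra. }
    assert (0 < H z) by (unfold H; pose proof (exp_pos (-(z/2))); nra).
    rewrite Fz, Fz1.
    apply Rle_trans with (c * exp (z/2) * H z1).
    * replace (c * (exp (z/2) * H z)) with (c * exp (z/2) * H z) by ring.
      apply Rmult_le_compat_l; nra.
    * replace (a * (exp (z1/2) * H z1)) with (a * exp (z1/2) * H z1) by ring.
      apply Rmult_le_compat_r; lra.
Qed.

Lemma G_eq x Q : 0 < x <= 1 -> 0 < Q -> G x Q / x = - / F (ln (1 - x + x*Q)).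
Proof.
intros Hx HQ. unfold G. destruct (Req_EM_T Q 1) as [e|n].
- subst. replace (1 - x + x*1) with 1 by ring. rewrite ln_1.
  unfold F. destruct (Req_EM_T 0 0); [|lra]. field. lra.
- set (L := 1 - x + x*Q).
  assert (HL : 0 < L) by (unfold L; nra).
  assert (HL1 : L <> 1) by (unfold L; intro h; apply n; nra).
  assert (Hz : ln L <> 0).
  { intro h. apply HL1. rewrite <- (exp_ln L HL), h. apply exp_0. }
  unfold F. destruct (Req_EM_T (ln L) 0); [contradiction|].
  rewrite (exp_ln L HL).
  assert (L - 1 = x*(Q-1)) by (unfold L; ring).
  rewrite H0. field. split; [|lra]. intro h. apply n. nra.
Qed.

Theorem mainTheorem14 (t x y : R) :
  0 <= t <= 1 -> 0 < x <= 1 -> 1 - exp (- t) <= y < 1 ->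
  lhs t x y <= rhs t y /\ lhs t 1 y = rhs t y.
Proof.
intros Ht Hx Hy. split.
2:{ unfold lhs, rhs. replace (-2*1*t) with (-2*t) by ring. replace (y*1) with y by ring.
    unfold Rdiv. rewrite Rinv_1, Rmult_1_r. reflexivity. }
set (u := exp (-t)). set (c := 1 - y). set (a := 1 - y*x).
set (w := 1 - x + x*u). set (b := exp (-2*x*t)).
set (N := (1-x)*a + x*b).
assert (Hu : 0 < u) by apply exp_pos.
assert (Hu1 : u <= 1) by (unfold u; rewrite <- exp_0; apply exp_le_exp; lra).
assert (Hcu : c <= u) by (unfold c, u; lra).
assert (Hc : 0 < c) by (unfold c; lra).
assert (Hac : a = 1 - x + x*c) by (unfold a, c; ring).
assert (Ha : 0 < a) by nra.
assert (Hb : 0 < b) by apply exp_pos.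
assert (Hbw : b <= w^2).
{ assert (E : b = exp (x*(-t) + (1-x)*0) ^ 2).
  { unfold b. simpl. rewrite Rmult_1_r, <- exp_plus. f_equal. ring. }
  pose proof (exp_conv x (-t) 0 ltac:(lra)). rewrite exp_0 in H0. fold u in H0.
  pose proof (exp_pos (x*(-t) + (1-x)*0)).
  rewrite E. unfold w. nra. }
assert (HN : 0 < N) by (unfold N; nra).
assert (Hu2 : exp (-2*t) = u^2).
{ unfold u. simpl. rewrite Rmult_1_r, <- exp_plus. f_equal. ring. }
assert (P1 : c <= a) by (rewrite Hac; assert (0 <= (1-x)*(1-c)) by (apply Rmult_le_pos; lra); lra).
assert (P2 : c * w <= a * u) by (unfold w; rewrite Hac; assert (0 <= (1-x)*(u-c)) by (apply Rmult_le_pos; lra); nra).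
set (M := (1-x)*a + x*w^2).
assert (HNM : N <= M) by (unfold N, M; nra).
assert (HM : 0 < M) by lra.
assert (P3 : c^3 * N <= a^3 * u^2).
{ assert (c^2 <= u^2) by (apply pow_incr; lra).
  assert (c^3 <= c*u^2) by (replace (c^3) with (c*c^2) by ring; apply Rmult_le_compat_l; lra).
  assert (c*u^2 <= a*u^2) by (apply Rmult_le_compat_r; nra).
  assert (c^2*w^2 <= a^2*u^2).
  { replace (c^2*w^2) with ((c*w)^2) by ring. replace (a^2*u^2) with ((a*u)^2) by ring.
    apply pow_incr. split; [|lra]. unfold w. nra. }
  assert (c^3*M <= a^3*u^2).
  { unfold M. replace (a^3*u^2) with ((1-x)*(a^2*u^2) + x*(c*(a^2*u^2))) by (rewrite Hac; ring).
    replace (c^3 * ((1-x)*a + x*w^2)) with ((1-x)*(c^3*a) + x*(c*(c^2*w^2))) by ring.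
    assert (c^3*a <= a^2*u^2) by (replace (a^2*u^2) with ((a*u^2)*a) by ring; apply Rmult_le_compat_r; lra).
    assert (c*(c^2*w^2) <= c*(a^2*u^2)) by (apply Rmult_le_compat_l; lra).
    assert (0 <= 1-x) by lra.
    apply Rplus_le_compat; apply Rmult_le_compat_l; lra. }
  assert (0 <= c^3) by (apply pow_le; lra).
  apply Rle_trans with (c^3*M); [apply Rmult_le_compat_l; lra|lra]. }
assert (Hcw : c^2*w^2 <= a^2*u^2).
{ replace (c^2*w^2) with ((c*w)^2) by ring. replace (a^2*u^2) with ((a*u)^2) by ring.
  apply pow_incr. split; [|lra]. unfold w. assert (0 <= x*u) by nra. nra. }
assert (Hc2 : 0 <= c^2) by (apply pow_le; lra).
assert (P4 : c^2 <= a * u^2 -> c^2 * N <= a^2 * u^2).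
{ intros h.
  assert (c^2*M <= a^2*u^2).
  { unfold M. replace (a^2*u^2) with ((1-x)*((a*u^2)*a) + x*(a^2*u^2)) by ring.
    replace (c^2 * ((1-x)*a + x*w^2)) with ((1-x)*(c^2*a) + x*(c^2*w^2)) by ring.
    assert (c^2*a <= (a*u^2)*a) by (apply Rmult_le_compat_r; lra).
    apply Rplus_le_compat; apply Rmult_le_compat_l; lra. }
  apply Rle_trans with (c^2*M); [apply Rmult_le_compat_l; lra|lra]. }
assert (P5 : c^2 > a * u^2 -> N * u^2 <= a * c).
{ intros h.
  assert (Hu2p : 0 <= u^2) by (apply pow_le; lra).
  assert (c*u^2 <= a*u^2) by (apply Rmult_le_compat_r; lra).
  assert (u^2 < c).
  { apply (Rmult_lt_reg_l c); [lra|]. replace (c*c) with (c^2) by ring. lra. }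
  assert (w^2 <= 1 - x + x*u^2).
  { assert (0 <= x*(1-x)*(1-u)^2) by (apply Rmult_le_pos; [apply Rmult_le_pos; lra| apply pow2_ge_0]).
    replace (1 - x + x*u^2) with (w^2 + x*(1-x)*(1-u)^2) by (unfold w; ring). lra. }
  assert (x*u^2 <= x*c) by (apply Rmult_le_compat_l; lra).
  assert (w^2 <= a) by lra.
  assert (w^2*u^2 <= a*u^2) by (apply Rmult_le_compat_r; lra).
  assert (M*u^2 <= c^2).
  { unfold M. replace ((( 1 - x) * a + x * w ^ 2) * u ^ 2) with ((1-x)*(a*u^2) + x*(w^2*u^2)) by ring.
    replace (c^2) with ((1-x)*c^2 + x*c^2) by ring.
    apply Rplus_le_compat; apply Rmult_le_compat_l; lra. }
  assert (c^2 <= a*c) by (replace (c^2) with (c*c) by ring; apply Rmult_le_compat_r; lra).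
  assert (N*u^2 <= M*u^2) by (apply Rmult_le_compat_r; lra).
  lra. }
pose proof (key a c N u Hc Ha HN Hu P1 P3 P4 P5) as K.
unfold lhs, rhs. fold b. fold a.
assert (HQ : 0 < b/a) by (apply Rdiv_lt_0_compat; lra).
replace ((1 - y) * G 1 (exp (-2 * t) / (1 - y))) with ((1-y) * (G 1 (exp (-2 * t) / (1 - y)) / 1)) by field.
rewrite (G_eq x (b/a) Hx HQ).
rewrite Hu2. fold c.
assert (HQ1 : 0 < u^2/c) by (apply Rdiv_lt_0_compat; nra).
rewrite (G_eq 1 (u^2/c) ltac:(lra) HQ1).
replace (1 - 1 + 1 * (u^2/c)) with (u^2/c) by ring.
replace (1 - x + x * (b/a)) with (N/a) by (unfold N; field; lra).
pose proof (F_pos (ln (N/a))). pose proof (F_pos (ln (u^2/c))).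
apply (Rmult_le_reg_r (F (ln (N/a)) * F (ln (u^2/c)))); [nra|].
replace (a * - / F (ln (N / a)) * (F (ln (N / a)) * F (ln (u ^ 2 / c)))) with (- (a * F (ln (u^2/c)))) by (field; lra).
replace (c * - / F (ln (u^2 / c)) * (F (ln (N / a)) * F (ln (u ^ 2 / c)))) with (- (c * F (ln (N/a)))) by (field; lra).
lra.
Qed.
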